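(* For any finite quiver $Q$, $\alpha\in\mathbb{N}^I$ and $\lambda\in\mathbb{C}^I$ with $\lambda\cdot\alpha=0$, the stratification of $\mathcal{N}(\lambda,\alpha)$ by representation type equals its stratification by orbit type: for each representation type $\tau$ with $\mathcal{R}_\tau\neq\emptyset$ there is a conjugacy class $\nu$ of stabilisers with $\mathcal{R}_\tau=\mathcal{N}(\lambda,\alpha)_\nu$.
   Context: $Q$ has vertices $I$, arrows $A$, head/tail $h,t$; $\overline{Q}$ is its double (adjoin $a^*:h(a)\to t(a)$); $\mathrm{Rep}(\overline{Q},\alpha)=\bigoplus_{a\in\overline{A}}\mathrm{Mat}(\alpha_{h(a)}\times\alpha_{t(a)},\mathbb{C})$ with conjugation action of $G(\alpha)=\prod_i\mathrm{GL}(\alpha_i)/\mathbb{C}^\times$; $\mu_\alpha(B)_i=\sum_{a\in A,h(a)=i}B_aB_{a^*}-\sum_{a\in A,t(a)=i}B_{a^*}B_a$; $\mathcal{N}(\lambda,\alpha)=\mu_\alpha^{-1}(\lambda)//G(\alpha)$, $\lambda$ meaning $(\lambda_i\mathrm{Id}_{\alpha_i})$; its points are isomorphism classes of semisimple modules of dimension $\alpha$ over $\Pi_\lambda=\mathbb{C}\overline{Q}/(\sum_{a\in A}[a,a^*]-\sum\lambda_ie_i)$. Representation type of $M_1^{\oplus k_1}\oplus\dots\oplus M_r^{\oplus k_r}$ ($M_t$ non-isomorphic simples of dimension $\beta^{(t)}$) is $(k_1,\beta^{(1)};\dots;k_r,\beta^{(r)})$ up to permutation; $\mathcal{R}_\tau$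 is the set of points of type $\tau$. Orbit type stratum $\mathcal{N}(\lambda,\alpha)_\nu$: points $\phi$ such that the stabilisers in $G(\alpha)$ of points of the unique closed orbit over $\phi$ lie in the conjugacy class $\nu$. *)

(* Defs.v *)
From HB Require Import structures.
From mathcomp Require Import all_boot all_order all_algebra.
Set Implicit Arguments. Unset Strict Implicit. Unset Printing Implicit Defensive.
Import Order.TTheory GRing.Theory Num.Theory.
Local Open Scope ring_scope.

Section QuiverReps.
Variable C : fieldType.
Variables (I A : finType) (h t : A -> I).

(* A representation of the double quiver Qbar of dimension vector beta:
   for every a in A a matrix B_a in Mat(beta_{h a} x beta_{t a}) and for the
   adjoined reverse arrow a^* : h a -> t a a matrix B_{a^*} in
   Mat(beta_{t a} x beta_{h a}).  Matrices act on column vectors. *)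
Record rep (beta : I -> nat) := Rep {
  arr  : forall a : A, 'M[C]_(beta (h a), beta (t a));
  arrs : forall a : A, 'M[C]_(beta (t a), beta (h a)) }.

(* transport a square matrix at vertex j to vertex i (0 if i <> j) *)
Definition vcast (beta : I -> nat) (i j : I) (M : 'M[C]_(beta j)) : 'M[C]_(beta i) :=
  match j =P i with
  | ReflectT e => castmx (congr1 beta e, congr1 beta e) M
  | ReflectF _ => 0
  end.

Definition mu (beta : I -> nat) (B : rep beta) (i : I) : 'M[C]_(beta i) :=
  \sum_(a | h a == i) vcast i (arr B a *m arrs B a)
  - \sum_(a | t a == i) vcast i (arrs B a *m arr B a).

Definition is_Pi_mod (lambda : I -> C) (beta : I -> nat) (B : rep beta) : Prop :=
  forall i, mu B i = (lambda i)%:M.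

Definition is_hom (beta beta' : I -> nat) (B : rep beta) (B' : rep beta')
    (phi : forall i, 'M[C]_(beta' i, beta i)) : Prop :=
  forall a, phi (h a) *m arr B a = arr B' a *m phi (t a) /\
            phi (t a) *m arrs B a = arrs B' a *m phi (h a).

Definition is_iso (beta beta' : I -> nat) (B : rep beta) (B' : rep beta') : Prop :=
  exists (phi : forall i, 'M[C]_(beta' i, beta i))
         (psi : forall i, 'M[C]_(beta i, beta' i)),
    [/\ is_hom B B' phi, is_hom B' B psi,
        forall i, psi i *m phi i = 1%:M & forall i, phi i *m psi i = 1%:M].

(* A subspace of
   column vectors is encoded by a matrix S_i whose row space is {v^T | v in U_i}. *)
Definition is_subrep (beta : I -> nat) (B : rep beta) (S : forall i, 'M[C]_(beta i)) : Prop :=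
  forall a, (S (t a) *m (arr B a)^T <= S (h a))%MS /\
            (S (h a) *m (arrs B a)^T <= S (t a))%MS.

Definition is_simple (beta : I -> nat) (B : rep beta) : Prop :=
  (exists i, 0 < beta i)%N /\
  forall S, is_subrep B S ->
    (forall i, \rank (S i) = 0%N) \/ (forall i, row_full (S i)).

(* representation types: lists of pairs (k_t, beta^(t)), read up to permutation *)
Definition reptype := seq (nat * {ffun I -> nat}).
Definition rt_mult (tau : reptype) (s : 'I_(size tau)) : nat :=
  (nth (0%N, [ffun => 0%N]) tau s).1.
Definition rt_dim (tau : reptype) (s : 'I_(size tau)) : I -> nat :=
  (nth (0%N, [ffun => 0%N]) tau s).2.
Arguments rt_mult : clear implicits.
Arguments rt_dim : clear implicits.

(* B has representation type tau = (k_1, beta^(1); ...; k_r, beta^(r)):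
   B is isomorphic to M_1^{k_1} (+) ... (+) M_r^{k_r} with M_s pairwise
   non-isomorphic simple Pi_lambda-modules of dimension beta^(s), k_s >= 1.
   The direct sum is expressed by its biproduct injections/projections. *)
Definition has_reptype (lambda : I -> C) (alpha : I -> nat) (B : rep alpha)
    (tau : reptype) : Prop :=
  exists M : forall s : 'I_(size tau), rep (rt_dim tau s),
    [/\ forall s, (0 < rt_mult tau s)%N,
        forall s, is_Pi_mod lambda (M s) /\ is_simple (M s),
        forall s s', s != s' -> ~ is_iso (M s) (M s') &
        exists (iota : forall s (c : 'I_(rt_mult tau s)) i, 'M[C]_(alpha i, rt_dim tau s i))
               (pi : forall s (c : 'I_(rt_mult tau s)) i, 'M[C]_(rt_dim tau s i, alpha i)),
          [/\ forall s c, is_hom (M s) B (iota s c),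
              forall s c, is_hom B (M s) (pi s c),
              forall s c i, pi s c i *m iota s c i = 1%:M,
              forall s c s' c' i, (s, val c) != (s', val c') ->
                 pi s' c' i *m iota s c i = 0 &
              forall i, \sum_(s < size tau) \sum_(c < rt_mult tau s)
                          iota s c i *m pi s c i = 1%:M]].

Definition semisimple (lambda : I -> C) (alpha : I -> nat) (B : rep alpha) : Prop :=
  exists tau, has_reptype lambda B tau.

Definition GLfam (alpha : I -> nat) := forall i, 'M[C]_(alpha i).
Definition in_GL (alpha : I -> nat) (g : GLfam alpha) : Prop :=
  forall i, g i \in unitmx.

Definition stab (alpha : I -> nat) (B : rep alpha) (g : GLfam alpha) : Prop :=
  in_GL g /\
  forall a, g (h a) *m arr B a *m invmx (g (t a)) = arr B a /\
            g (t a) *m arrs B a *m invmx (g (h a)) = arrs B a.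

Definition conj_subsets (alpha : I -> nat) (S1 S2 : GLfam alpha -> Prop) : Prop :=
  exists g : GLfam alpha, in_GL g /\
    forall x, S1 x <-> S2 (fun i => g i *m x i *m invmx (g i)).

End QuiverReps.

(* Main.v *)
Require Import Defs.
From HB Require Import structures.
From mathcomp Require Import all_boot all_order all_algebra.
From mathcomp Require Import reals complex.
From Stdlib Require Import FunctionalExtensionality.
Set Implicit Arguments. Unset Strict Implicit. Unset Printing Implicit Defensive.
Import Order.TTheory GRing.Theory Num.Theory.
Local Open Scope ring_scope.

Section Gen.
Variable C : numClosedFieldType.
Variables (I A : finType) (h t : A -> I).
Local Notation rep := (rep C h t).

Lemma hom_comp (b1 b2 b3 : I -> nat) (B1 : rep b1) (B2 : rep b2) (B3 : rep b3)
  (f : forall i, 'M[C]_(b2 i, b1 i)) (g : forall i, 'M[C]_(b3 i, b2 i)) :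
  is_hom B1 B2 f -> is_hom B2 B3 g -> is_hom B1 B3 (fun i => g i *m f i).
Proof.
move=> Hf Hg a; have [f1 f2] := Hf a; have [g1 g2] := Hg a.
by rewrite -!mulmxA f1 f2 !mulmxA g1 g2.
Qed.

Lemma hom_sub (b1 b2 : I -> nat) (B1 : rep b1) (B2 : rep b2)
  (f g : forall i, 'M[C]_(b2 i, b1 i)) :
  is_hom B1 B2 f -> is_hom B1 B2 g -> is_hom B1 B2 (fun i => f i - g i).
Proof.
move=> Hf Hg a; have [f1 f2] := Hf a; have [g1 g2] := Hg a.
by rewrite !mulmxBl !mulmxBr f1 f2 g1 g2.
Qed.

Lemma hom_add (b1 b2 : I -> nat) (B1 : rep b1) (B2 : rep b2)
  (f g : forall i, 'M[C]_(b2 i, b1 i)) :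
  is_hom B1 B2 f -> is_hom B1 B2 g -> is_hom B1 B2 (fun i => f i + g i).
Proof.
move=> Hf Hg a; have [f1 f2] := Hf a; have [g1 g2] := Hg a.
by rewrite !mulmxDl !mulmxDr f1 f2 g1 g2.
Qed.

Lemma hom_scal (b : I -> nat) (B : rep b) (c : C) :
  is_hom B B (fun i => c%:M).
Proof. by move=> a; rewrite !mul_scalar_mx !mul_mx_scalar. Qed.

Lemma hom_ext (b1 b2 : I -> nat) (B1 : rep b1) (B2 : rep b2)
  (f g : forall i, 'M[C]_(b2 i, b1 i)) :
  (forall i, f i = g i) -> is_hom B1 B2 f -> is_hom B1 B2 g.
Proof. by move=> e Hf a; rewrite -!e. Qed.

Lemma hom0 (b1 b2 : I -> nat) (B1 : rep b1) (B2 : rep b2) :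
  is_hom B1 B2 (fun i => 0).
Proof. by move=> a; rewrite !mulmx0 !mul0mx. Qed.

Lemma hom_sum (b1 b2 : I -> nat) (B1 : rep b1) (B2 : rep b2) (J : finType)
  (P : pred J) (f : J -> forall i, 'M[C]_(b2 i, b1 i)) :
  (forall j, is_hom B1 B2 (f j)) -> is_hom B1 B2 (fun i => \sum_(j | P j) f j i).
Proof.
move=> Hf.
suff H : forall s : seq J, is_hom B1 B2 (fun i => \sum_(j <- s | P j) f j i) by exact: H.
elim=> [|j s IH]; first by apply: hom_ext (hom0 _ _) => i; rewrite big_nil.
case Pj: (P j).
  by apply: hom_ext (hom_add (Hf j) IH) => i; rewrite big_cons Pj.
by apply: hom_ext IH => i; rewrite big_cons Pj.
Qed.

Lemma schur_ker (b1 b2 : I -> nat) (M : rep b1) (N : rep b2)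
  (f : forall i, 'M[C]_(b2 i, b1 i)) :
  is_simple M -> is_hom M N f ->
  (forall i, f i = 0) \/ (forall i, row_free (f i)^T).
Proof.
move=> [_ Hs] Hf.
have Hsub : is_subrep M (fun i => kermx (f i)^T).
  move=> a; have [f1 f2] := Hf a; split; rewrite sub_kermx -mulmxA -trmx_mul.
    by rewrite f1 trmx_mul mulmxA mulmx_ker mul0mx.
  by rewrite f2 trmx_mul mulmxA mulmx_ker mul0mx.
case: (Hs _ Hsub) => H; [right|left] => i.
  by rewrite -kermx_eq0 -mxrank_eq0 H.
have : (1%:M <= kermx (f i)^T)%MS by apply: submx_full; apply: H.
rewrite sub_kermx mul1mx => /eqP Ht.
by rewrite -(trmxK (f i)) Ht trmx0.
Qed.

Lemma schur_im (b1 b2 : I -> nat) (N : rep b1) (M : rep b2)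
  (f : forall i, 'M[C]_(b2 i, b1 i)) :
  is_simple M -> is_hom N M f ->
  (forall i, f i = 0) \/ (forall i, row_full (f i)^T).
Proof.
move=> [_ Hs] Hf.
have Hsub : is_subrep M (fun i => <<(f i)^T>>%MS).
  move=> a; have [f1 f2] := Hf a; split.
    have e1 : (<<(f (t a))^T>> <= (f (t a))^T)%MS by rewrite genmxE.
    apply: submx_trans (submxMr _ e1) _; rewrite genmxE -trmx_mul -f1 trmx_mul.
    exact: submxMl.
  have e1 : (<<(f (h a))^T>> <= (f (h a))^T)%MS by rewrite genmxE.
  apply: submx_trans (submxMr _ e1) _; rewrite genmxE -trmx_mul -f2 trmx_mul.
  exact: submxMl.
case: (Hs _ Hsub) => H; [left|right] => i.
  have := H i; rewrite genmxE => /eqP; rewrite mxrank_eq0 => /eqP Ht.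
  by rewrite -(trmxK (f i)) Ht trmx0.
by have := H i; rewrite /row_full genmxE.
Qed.

Lemma schur_iso (b1 b2 : I -> nat) (M : rep b1) (N : rep b2)
  (f : forall i, 'M[C]_(b2 i, b1 i)) :
  is_simple M -> is_simple N -> is_hom M N f -> (exists i, f i != 0) ->
  is_iso M N.
Proof.
move=> sM sN Hf [i0 nz].
have Hfree : forall i, row_free (f i)^T.
  by case: (schur_ker sM Hf) => // H; rewrite H eqxx in nz.
have Hfull : forall i, row_full (f i)^T.
  by case: (schur_im sN Hf) => // H; rewrite H eqxx in nz.
pose g i := (pinvmx (f i)^T)^T.
have gf i : g i *m f i = 1%:M.
  by rewrite /g -[f i]trmxK -trmx_mul trmxK mulmxVp // trmx1.
have fg i : f i *m g i = 1%:M.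
  by rewrite /g -[f i]trmxK -trmx_mul trmxK mulVpmx // trmx1.
exists f, g; split => // a; have [f1 f2] := Hf a; split.
  by rewrite -[LHS]mulmx1 -(fg (t a)) !mulmxA -(mulmxA (g _)) -f1 mulmxA gf mul1mx.
by rewrite -[LHS]mulmx1 -(fg (h a)) !mulmxA -(mulmxA (g _)) -f2 mulmxA gf mul1mx.
Qed.


Lemma schur_scal (b : I -> nat) (M : rep b) (f : forall i, 'M[C]_(b i)) :
  is_simple M -> is_hom M M f -> exists a : C, forall i, f i = a%:M.
Proof.
move=> sM Hf; have [[i0 Hi0] _] := sM.
have : size (char_poly (f i0)^T) != 1%N by rewrite size_char_poly; case: (b i0) Hi0.
case/closed_rootP => a; rewrite -eigenvalue_root_char /eigenvalue /eigenspace => Hk.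
exists a.
have Hg := hom_sub Hf (hom_scal M a).
case: (schur_ker sM Hg) => H; first by move=> i; apply/eqP; rewrite -subr_eq0 H.
have := H i0; rewrite -kermx_eq0 linearB /= tr_scalar_mx => /eqP E.
by rewrite E eqxx in Hk.
Qed.

Lemma scalar_inj (m : nat) (x y : C) : (0 < m)%N -> (x%:M : 'M[C]_m) = y%:M -> x = y.
Proof.
move=> Hm e; have := congr1 (fun M : 'M[C]_m => M (Ordinal Hm) (Ordinal Hm)) e.
by rewrite /= !mxE eqxx !mulr1n.
Qed.

Lemma tr_idem (m : nat) (X : 'M[C]_m) : X *m X = X -> \tr X = (\rank X)%:R.
Proof.
move=> HX.
move: (col_base X) (row_base X) (mulmx_base X) (col_base_full X) (row_base_free X).
move=> L R HLR /row_fullP [L' HL] HR.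
have HRL : R *m L = 1%:M.
  have e : L *m (R *m L) *m R = L *m 1%:M *m R.
    by rewrite mulmx1 !mulmxA -(mulmxA (L *m R)) HLR HX.
  have e2 := congr1 (mulmx L') e.
  rewrite -!mulmxA !(mulmxA L') HL !mul1mx in e2.
  by apply: (row_free_inj HR); rewrite mul1mx -mulmxA.
by rewrite -[in LHS]HLR mxtrace_mulC HRL mxtrace1.
Qed.

Unset Implicit Arguments.
Record decomp (lambda : I -> C) (al : I -> nat) (B : rep al) (n : nat)
  (k : 'I_n -> nat) (d : 'I_n -> I -> nat) (M : forall s, rep (d s))
  (io : forall s (c : 'I_(k s)) i, 'M[C]_(al i, d s i))
  (pr : forall s (c : 'I_(k s)) i, 'M[C]_(d s i, al i)) : Prop := Decomp {
  dk : forall s, (0 < k s)%N;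
  dPi : forall s, is_Pi_mod lambda (M s);
  dsimp : forall s, is_simple (M s);
  dniso : forall s s', s != s' -> ~ is_iso (M s) (M s');
  dio : forall s c, is_hom (M s) B (io s c);
  dpr : forall s c, is_hom B (M s) (pr s c);
  dpi1 : forall s c i, pr s c i *m io s c i = 1%:M;
  dpi0 : forall s c s' c' i, (s, val c) != (s', val c') -> pr s' c' i *m io s c i = 0;
  dsum : forall i, \sum_s \sum_c io s c i *m pr s c i = 1%:M }.

Arguments dk {lambda al B n k d M io pr}. Arguments dPi {lambda al B n k d M io pr}. Arguments dsimp {lambda al B n k d M io pr}. Arguments dniso {lambda al B n k d M io pr}. Arguments dio {lambda al B n k d M io pr}. Arguments dpr {lambda al B n k d M io pr}. Arguments dpi1 {lambda al B n k d M io pr}. Arguments dpi0 {lambda al B n k d M io pr}. Arguments dsum {lambda al B n k d M io pr}.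

Section Dec.
Variables (lambda : I -> C) (al : I -> nat) (B : rep al) (n : nat)
  (k : 'I_n -> nat) (d : 'I_n -> I -> nat) (M : forall s, rep (d s))
  (io : forall s (c : 'I_(k s)) i, 'M[C]_(al i, d s i))
  (pr : forall s (c : 'I_(k s)) i, 'M[C]_(d s i, al i)).
Hypothesis D : decomp lambda al B n k d M io pr.
Set Implicit Arguments.

Lemma dcross (phi : forall i, 'M[C]_(al i)) s s2 (c : 'I_(k s)) (c2 : 'I_(k s2)) i :
  is_hom B B phi -> s != s2 -> pr s2 c2 i *m phi i *m io s c i = 0.
Proof.
move=> Hphi ne.
have Hg : is_hom (M s) (M s2) (fun i => pr s2 c2 i *m (phi i *m io s c i)).
  exact: hom_comp (hom_comp (dio D s c) Hphi) (dpr D s2 c2).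
case: (boolP [exists i, pr s2 c2 i *m (phi i *m io s c i) != 0]) => [/existsP Ex|].
  by case: (dniso D _ _ ne); apply: schur_iso (dsimp D s) (dsimp D s2) Hg Ex.
by rewrite negb_exists => /forallP /(_ i); rewrite negbK mulmxA => /eqP.
Qed.

Lemma dscal (phi : forall i, 'M[C]_(al i)) s (c c2 : 'I_(k s)) :
  is_hom B B phi -> exists a : C, forall i, pr s c2 i *m phi i *m io s c i = a%:M.
Proof.
move=> Hphi.
have Hg : is_hom (M s) (M s) (fun i => pr s c2 i *m (phi i *m io s c i)).
  exact: hom_comp (hom_comp (dio D s c) Hphi) (dpr D s c2).
have [a Ha] := schur_scal (dsimp D s) Hg; exists a => i; by rewrite -mulmxA.
Qed.

Lemma dprphi (phi : forall i, 'M[C]_(al i)) s (c : 'I_(k s)) i :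
  is_hom B B phi ->
  pr s c i *m phi i = \sum_c2 pr s c i *m phi i *m io s c2 i *m pr s c2 i.
Proof.
move=> Hphi; rewrite -[LHS]mulmx1 -(dsum D i) mulmx_sumr (bigD1 s) //=.
rewrite [X in _ + X]big1 ?addr0.
  by rewrite mulmx_sumr; apply: eq_bigr => c2 _; rewrite mulmxA.
move=> s2 ne; rewrite mulmx_sumr big1 // => c2 _.
by rewrite mulmxA (dcross _ _ _ Hphi) ?mul0mx // eq_sym.
Qed.

Lemma dphiio (phi : forall i, 'M[C]_(al i)) s (c : 'I_(k s)) i :
  is_hom B B phi ->
  phi i *m io s c i = \sum_c2 io s c2 i *m (pr s c2 i *m phi i *m io s c i).
Proof.
move=> Hphi; rewrite -[LHS]mul1mx -(dsum D i) mulmx_suml (bigD1 s) //=.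
rewrite [X in _ + X]big1 ?addr0.
  by rewrite mulmx_suml; apply: eq_bigr => c2 _; rewrite !mulmxA.
move=> s2 ne; rewrite mulmx_suml big1 // => c2 _.
by rewrite -!mulmxA (mulmxA (pr _ _ _)) (dcross _ _ _ Hphi) ?mulmx0 // eq_sym.
Qed.

Lemma dexpand (phi : forall i, 'M[C]_(al i)) i :
  is_hom B B phi ->
  phi i = \sum_s \sum_c \sum_c2 io s c i *m (pr s c i *m phi i *m io s c2 i) *m pr s c2 i.
Proof.
move=> Hphi; rewrite -[LHS]mul1mx -(dsum D i) mulmx_suml; apply: eq_bigr => s _.
rewrite mulmx_suml; apply: eq_bigr => c _.
rewrite -mulmxA [in LHS](dprphi _ _ Hphi) mulmx_sumr; apply: eq_bigr => c2 _.
by rewrite !mulmxA.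
Qed.

Definition zz s i := \sum_(c : 'I_(k s)) io s c i *m pr s c i.

Lemma hom_unit s (c c2 : 'I_(k s)) : is_hom B B (fun i => io s c i *m pr s c2 i).
Proof. exact: hom_comp (dpr D s c2) (dio D s c). Qed.

Lemma hom_zz s : is_hom B B (zz s).
Proof. apply: hom_sum => c; exact: hom_unit. Qed.

Lemma zz_central (phi : forall i, 'M[C]_(al i)) s i :
  is_hom B B phi -> zz s i *m phi i = phi i *m zz s i.
Proof.
move=> Hphi; rewrite /zz mulmx_suml mulmx_sumr.
transitivity (\sum_c \sum_c2 io s c i *m (pr s c i *m phi i *m io s c2 i) *m pr s c2 i).
  apply: eq_bigr => c _; rewrite -mulmxA [in LHS](dprphi _ _ Hphi) mulmx_sumr.
  by apply: eq_bigr => c2 _; rewrite !mulmxA.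
rewrite exchange_big /=; apply: eq_bigr => c2 _.
rewrite [in RHS]mulmxA [in RHS](dphiio _ _ Hphi) mulmx_suml; apply: eq_bigr => c _.
by rewrite !mulmxA.
Qed.



Lemma pr_zz s (c : 'I_(k s)) s2 i :
  pr s c i *m zz s2 i = if s2 == s then pr s c i else 0.
Proof.
rewrite /zz mulmx_sumr; case: eqP => [->|ne].
  rewrite (bigD1 c) //= mulmxA (dpi1 D) mul1mx big1 ?addr0 // => c2 ne2.
  by rewrite mulmxA (dpi0 D) ?mul0mx // xpair_eqE negb_and eqxx /=.
rewrite big1 // => c2 _; rewrite mulmxA (dpi0 D) ?mul0mx //.
by rewrite xpair_eqE negb_and; apply/orP; left; apply/eqP.
Qed.

Lemma zz_io s (c : 'I_(k s)) s2 i :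
  zz s2 i *m io s c i = if s2 == s then io s c i else 0.
Proof.
rewrite /zz mulmx_suml; case: eqP => [->|ne].
  rewrite (bigD1 c) //= -mulmxA (dpi1 D) mulmx1 big1 ?addr0 // => c2 ne2.
  by rewrite -mulmxA (dpi0 D) ?mulmx0 // xpair_eqE negb_and eqxx /= eq_sym.
rewrite big1 // => c2 _; rewrite -mulmxA (dpi0 D) ?mulmx0 //.
by rewrite xpair_eqE negb_and; apply/orP; left; apply/eqP => e; apply: ne.
Qed.

Lemma tr_zz s i : \tr (zz s i) = (k s * d s i)%:R.
Proof.
rewrite /zz raddf_sum /= (eq_bigr (fun _ => (d s i)%:R)).
  by rewrite sumr_const card_ord natrM mulrC mulr_natr.
by move=> c _; rewrite mxtrace_mulC (dpi1 D) mxtrace1.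
Qed.

Lemma dpos s : exists i, (0 < d s i)%N.
Proof. by case: (dsimp D s). Qed.

Lemma zz_idem s i : zz s i *m zz s i = zz s i.
Proof.
rewrite {2}/zz mulmx_sumr; apply: eq_bigr => c _.
by rewrite mulmxA zz_io eqxx.
Qed.

Lemma pr_unit s (c c2 c3 : 'I_(k s)) i :
  pr s c i *m (io s c2 i *m pr s c3 i) = if c == c2 then pr s c3 i else 0.
Proof.
rewrite mulmxA; case: eqP => [->|ne]; first by rewrite (dpi1 D) mul1mx.
rewrite (dpi0 D) ?mul0mx // xpair_eqE negb_and eqxx /=.
by apply/eqP => e; apply: ne; apply: val_inj.
Qed.

Lemma unit_io s (c c2 c3 : 'I_(k s)) i :
  (io s c2 i *m pr s c3 i) *m io s c i = if c == c3 then io s c2 i else 0.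
Proof.
rewrite -mulmxA; case: eqP => [->|ne]; first by rewrite (dpi1 D) mulmx1.
rewrite (dpi0 D) ?mulmx0 // xpair_eqE negb_and eqxx /=.
by apply/eqP => e; apply: ne; apply: val_inj.
Qed.

Lemma zz_indep (a : 'I_n -> C) s :
  (forall i, \sum_s2 a s2 *: zz s2 i = zz s i) -> forall s2, a s2 = (s2 == s)%:R.
Proof.
move=> Ha s2; have [i Hi] := dpos s2.
pose c0 : 'I_(k s2) := Ordinal (dk D s2).
have L : pr s2 c0 i *m zz s2 i *m io s2 c0 i = 1%:M by rewrite pr_zz eqxx (dpi1 D).
have R : pr s2 c0 i *m zz s i *m io s2 c0 i = ((s2 == s)%:R)%:M.
  rewrite pr_zz eq_sym; case: eqP => _; first by rewrite (dpi1 D).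
  by rewrite mul0mx raddf0.
have := congr1 (fun Y => pr s2 c0 i *m Y *m io s2 c0 i) (Ha i); cbv beta.
rewrite R mulmx_sumr mulmx_suml (bigD1 s2) //= big1 ?addr0; last first.
  by move=> s3 ne; rewrite -scalemxAr -scalemxAl pr_zz (negbTE ne) mul0mx scaler0.
rewrite -scalemxAr -scalemxAl L scalemx1 => E; exact: scalar_inj Hi E.
Qed.

Lemma collapse_r s (c : 'I_(k s)) i m (Y : forall s', 'I_(k s') -> 'M[C]_(d s' i, m)) :
  \sum_s' \sum_(c' : 'I_(k s')) pr s c i *m io s' c' i *m Y s' c' = Y s c.
Proof.
rewrite (bigD1 s) //= [X in _ + X]big1 ?addr0.
  rewrite (bigD1 c) //= (dpi1 D) mul1mx [X in _ + X]big1 ?addr0 // => c' ne.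
  rewrite (dpi0 D) ?mul0mx // xpair_eqE negb_and eqxx /=.
  by apply/eqP => e; move/eqP: ne; apply; apply: val_inj.
move=> s' ne; apply: big1 => c' _; rewrite (dpi0 D) ?mul0mx //.
by rewrite xpair_eqE negb_and ne.
Qed.

Lemma collapse_l s (c : 'I_(k s)) i m (Y : forall s', 'I_(k s') -> 'M[C]_(m, d s' i)) :
  \sum_s' \sum_(c' : 'I_(k s')) Y s' c' *m (pr s' c' i *m io s c i) = Y s c.
Proof.
rewrite (bigD1 s) //= [X in _ + X]big1 ?addr0.
  rewrite (bigD1 c) //= (dpi1 D) mulmx1 [X in _ + X]big1 ?addr0 // => c' ne.
  rewrite (dpi0 D) ?mulmx0 // xpair_eqE negb_and eqxx /=.
  by apply/eqP => e; move/eqP: ne; apply; apply: val_inj.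
move=> s' ne; apply: big1 => c' _; rewrite (dpi0 D) ?mulmx0 //.
by rewrite xpair_eqE negb_and eq_sym ne.
Qed.

Lemma zz_inj s s2 : (forall i, zz s i = zz s2 i) -> s = s2.
Proof.
move=> E; have [i Hi] := dpos s.
pose c0 : 'I_(k s) := Ordinal (dk D s).
have := congr1 (fun Y => pr s c0 i *m Y *m io s c0 i) (E i); cbv beta.
rewrite !pr_zz eqxx; case: eqP => // ne.
rewrite (dpi1 D) mul0mx => /matrixP /(_ (Ordinal Hi) (Ordinal Hi)).
by rewrite !mxE eqxx /= => /eqP; rewrite oner_eq0.
Qed.

End Dec.

Section Two.
Unset Implicit Arguments.
Variables (lambda : I -> C) (al : I -> nat) (B0 B1 : rep al)
  (n0 : nat) (k0 : 'I_n0 -> nat) (d0 : 'I_n0 -> I -> nat) (M0 : forall s, rep (d0 s))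
  (io0 : forall s (c : 'I_(k0 s)) i, 'M[C]_(al i, d0 s i))
  (pr0 : forall s (c : 'I_(k0 s)) i, 'M[C]_(d0 s i, al i))
  (n1 : nat) (k1 : 'I_n1 -> nat) (d1 : 'I_n1 -> I -> nat) (M1 : forall s, rep (d1 s))
  (io1 : forall s (c : 'I_(k1 s)) i, 'M[C]_(al i, d1 s i))
  (pr1 : forall s (c : 'I_(k1 s)) i, 'M[C]_(d1 s i, al i)).
Hypothesis D0 : decomp lambda al B0 n0 k0 d0 M0 io0 pr0.
Hypothesis D1 : decomp lambda al B1 n1 k1 d1 M1 io1 pr1.
Hypothesis H01 : forall s (c c2 : 'I_(k0 s)), is_hom B1 B1 (fun i => io0 s c i *m pr0 s c2 i).
Hypothesis H10 : forall t (e e2 : 'I_(k1 t)), is_hom B0 B0 (fun i => io1 t e i *m pr1 t e2 i).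
Set Implicit Arguments.

Lemma zz_comb s : exists a : 'I_n1 -> C, (forall u, a u = 0 \/ a u = 1) /\
  forall i, zz io0 pr0 s i = \sum_u a u *: zz io1 pr1 u i.
Proof.
set z := zz io0 pr0 s.
have Hz : is_hom B1 B1 z by apply: hom_sum => c; apply: H01.
have Hc u e e2 i : z i *m (io1 u e i *m pr1 u e2 i) = io1 u e i *m pr1 u e2 i *m z i.
  exact: (zz_central D0 s i (H10 u e e2)).
pose e0 u : 'I_(k1 u) := Ordinal (dk D1 u).
have /fin_all_exists [a Ha] : forall u, exists a : C, forall i,
    pr1 u (e0 u) i *m z i *m io1 u (e0 u) i = a%:M.
  by move=> u; exact: (dscal D1 (e0 u) (e0 u) Hz).
have Hcoef u (e e2 : 'I_(k1 u)) i :
    pr1 u e i *m z i *m io1 u e2 i = if e == e2 then (a u)%:M else 0.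
  case: eqP => [<-|ne].
    have -> : pr1 u e i = pr1 u (e0 u) i *m (io1 u (e0 u) i *m pr1 u e i).
      by rewrite mulmxA (dpi1 D1) mul1mx.
    rewrite -[X in X *m io1 u e i]mulmxA -Hc !mulmxA -(mulmxA _ (pr1 u e i)) (dpi1 D1).
    by rewrite mulmx1 Ha.
  have -> : io1 u e2 i = io1 u e2 i *m pr1 u e2 i *m io1 u e2 i.
    by rewrite -mulmxA (dpi1 D1) mulmx1.
  rewrite mulmxA -(mulmxA (pr1 u e i)) Hc !mulmxA (dpi0 D1) ?mul0mx //.
  by rewrite xpair_eqE negb_and eqxx /=; apply/eqP => E; apply: ne; apply: val_inj.
exists a; split.
  move=> tt; have [i Hi] := dpos D1 tt.
  have E : (a tt * a tt)%:M = (a tt)%:M :> 'M[C]_(d1 tt i).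
    have zI : z i *m z i = z i := zz_idem D0 s i.
    rewrite scalar_mxM -!Ha -[in RHS]zI.
    rewrite !mulmxA; set Q := pr1 tt (e0 tt) i *m z i.
    have -> : Q *m io1 tt (e0 tt) i *m pr1 tt (e0 tt) i *m z i *m io1 tt (e0 tt) i =
      Q *m ((io1 tt (e0 tt) i *m pr1 tt (e0 tt) i) *m z i) *m io1 tt (e0 tt) i.
      by rewrite !mulmxA.
    by rewrite -Hc !mulmxA -(mulmxA _ (pr1 _ _ _)) (dpi1 D1) mulmx1.
  have := scalar_inj Hi E => /eqP; rewrite -subr_eq0 -{3}[a tt]mulr1 -mulrBr mulf_eq0 subr_eq0.
  by case/orP => /eqP ->; [left|right].
move=> i; rewrite (dexpand D1 i Hz); apply: eq_bigr => tt _.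
rewrite /zz scaler_sumr; apply: eq_bigr => e _.
rewrite (bigD1 e) //= big1 ?addr0; last first.
  by move=> e2 ne; rewrite Hcoef eq_sym (negbTE ne) mulmx0 mul0mx.
by rewrite Hcoef eqxx mul_mx_scalar scalemxAl.
Qed.

Lemma dim_div s u : (forall i, zz io0 pr0 s i = zz io1 pr1 u i) ->
  exists r, (0 < r)%N /\ forall i, d0 s i = (r * d1 u i)%N.
Proof.
move=> Hzz.
pose c0 : 'I_(k0 s) := Ordinal (dk D0 s).
pose w i := io0 s c0 i *m pr0 s c0 i.
have Hw : is_hom B1 B1 w := H01 s c0 c0.
have /fin_all_exists [x Hx] : forall e : 'I_(k1 u), exists f : 'I_(k1 u) -> C,
    forall e2 i, pr1 u e i *m w i *m io1 u e2 i = (f e2)%:M.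
  move=> e; have /fin_all_exists [f Hf] : forall e2 : 'I_(k1 u), exists a : C,
      forall i, pr1 u e i *m w i *m io1 u e2 i = a%:M.
    by move=> e2; exact: (dscal D1 e2 e Hw).
  by exists f.
have Hzw i : w i = zz io1 pr1 u i *m w i.
  by rewrite -Hzz /w mulmxA (zz_io D0) eqxx.
have Hexp i : w i = \sum_e \sum_e2 io1 u e i *m (x e e2)%:M *m pr1 u e2 i.
  rewrite [LHS](dexpand D1 i Hw) (bigD1 u) //= [X in _ + X]big1 ?addr0.
    by apply: eq_bigr => e _; apply: eq_bigr => e2 _; rewrite Hx.
  move=> u2 ne; apply: big1 => e _; apply: big1 => e2 _.
  by rewrite Hzw (mulmxA (pr1 _ _ _)) (pr_zz D1) eq_sym (negbTE ne) !mul0mx mulmx0 mul0mx.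
pose X := \matrix_(e, e2) x e e2.
have HX : X *m X = X.
  apply/matrixP => e e2; rewrite !mxE.
  have [i Hi] := dpos D1 u.
  apply: (@scalar_inj (d1 u i)) => //.
  rewrite -Hx; have wI : w i *m w i = w i.
    by rewrite /w -mulmxA (mulmxA (pr0 _ _ _)) (dpi1 D0) mul1mx.
  rewrite -{1}wI mulmxA (dprphi D1 e i Hw) !mulmx_suml raddf_sum /=.
  apply: eq_bigr => f _; rewrite !mxE scalar_mxM -!Hx.
  by rewrite !mulmxA.
have Htr i : (d0 s i)%:R = \tr X * (d1 u i)%:R :> C.
  have -> : (d0 s i)%:R = \tr (w i) by rewrite /w mxtrace_mulC (dpi1 D0) mxtrace1.
  rewrite Hexp raddf_sum /mxtrace mulr_suml; apply: eq_bigr => e _.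
  rewrite raddf_sum /= (bigD1 e) //= [X in _ + X]big1 ?addr0.
    by rewrite mxtrace_mulC mul_mx_scalar -scalemxAr mxtraceZ (dpi1 D1) mxtrace1 mxE.
  move=> e2 ne; rewrite mxtrace_mulC mul_mx_scalar -scalemxAr (dpi0 D1) ?scaler0 ?mxtrace0 //.
  by rewrite xpair_eqE negb_and eqxx /= eq_sym.
exists (\rank X); split; last first.
  move=> i; apply/eqP; rewrite -(eqr_nat C) natrM Htr tr_idem //.
have [i Hi] := dpos D0 s.
have := Htr i; rewrite tr_idem // -natrM => /eqP; rewrite eqr_nat => /eqP E.
by move: Hi; rewrite E muln_gt0 => /andP [].
Qed.

End Two.

Lemma sum_conj m1 m2 m3 m4 (P : 'M[C]_(m1, m2)) (J : finType) (F : J -> 'M[C]_(m2, m3))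
  (Q : 'M[C]_(m3, m4)) : P *m (\sum_j F j) *m Q = \sum_j P *m F j *m Q.
Proof. by rewrite mulmx_sumr mulmx_suml. Qed.

Section Trans.
Unset Implicit Arguments.
Variables (lambda : I -> C) (al : I -> nat) (B B' : rep al)
  (n : nat) (k : 'I_n -> nat) (d : 'I_n -> I -> nat) (M M' : forall s, rep (d s))
  (io io' : forall s (c : 'I_(k s)) i, 'M[C]_(al i, d s i))
  (pr pr' : forall s (c : 'I_(k s)) i, 'M[C]_(d s i, al i)).
Hypothesis D : decomp lambda al B n k d M io pr.
Hypothesis D' : decomp lambda al B' n k d M' io' pr'.
Set Implicit Arguments.

Definition TT i := \sum_s \sum_(c : 'I_(k s)) io' s c i *m pr s c i.
Definition TT' i := \sum_s \sum_(c : 'I_(k s)) io s c i *m pr' s c i.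

Lemma TT_io s (c : 'I_(k s)) i : TT i *m io s c i = io' s c i.
Proof.
rewrite /TT mulmx_suml -[RHS](collapse_l D c (fun s' c' => io' s' c' i)).
apply: eq_bigr => s' _; rewrite mulmx_suml; apply: eq_bigr => c' _.
by rewrite mulmxA.
Qed.

Lemma pr_TT' s (c : 'I_(k s)) i : pr s c i *m TT' i = pr' s c i.
Proof.
rewrite /TT' mulmx_sumr -[RHS](collapse_r D c (fun s' c' => pr' s' c' i)).
apply: eq_bigr => s' _; rewrite mulmx_sumr; apply: eq_bigr => c' _.
by rewrite mulmxA.
Qed.

Lemma TTK i : TT i *m TT' i = 1%:M.
Proof.
rewrite /TT mulmx_suml -(dsum D' i); apply: eq_bigr => s _.
rewrite mulmx_suml; apply: eq_bigr => c _.
by rewrite -mulmxA pr_TT'.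
Qed.

Lemma transfer (phi : forall i, 'M[C]_(al i)) :
  is_hom B B phi -> is_hom B' B' (fun i => TT i *m phi i *m TT' i).
Proof.
move=> Hphi.
apply: (hom_ext (f := fun i => \sum_s \sum_(c : 'I_(k s)) \sum_(c2 : 'I_(k s))
   io' s c i *m ((pr s c i *m phi i *m io s c2 i) *m pr' s c2 i))).
  move=> i; rewrite [in RHS](dexpand D i Hphi) (sum_conj (TT i)).
  apply: eq_bigr => s _; rewrite (sum_conj (TT i)).
  apply: eq_bigr => c _; rewrite (sum_conj (TT i)).
  apply: eq_bigr => c2 _.
  by rewrite !mulmxA TT_io -!mulmxA pr_TT'.
apply: hom_sum => s; apply: hom_sum => c; apply: hom_sum => c2.
have [a Ha] := dscal D c2 c Hphi.
apply: (hom_ext (f := fun i => io' s c i *m (a%:M *m pr' s c2 i))) => [i|].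
  by rewrite Ha.
by apply: hom_comp (dio D' s c); apply: hom_comp (dpr D' s c2) (hom_scal (M' s) a).
Qed.

End Trans.

Unset Implicit Arguments.
Definition HRd lambda al (B : rep al) n (k : 'I_n -> nat) (d : 'I_n -> I -> nat) :=
  exists M io pr, decomp lambda al B n k d M io pr.
Set Implicit Arguments.

Lemma has_reptypeE lambda alpha (B : rep alpha) tau :
  has_reptype lambda B tau <-> HRd lambda alpha B (size tau) (@rt_mult I tau) (@rt_dim I tau).
Proof.
split.
  case=> M [Hk HM Hn [io [pr [Hio Hpr H1 H0 Hs]]]].
  exists M, io, pr; constructor => //; move=> s; by case: (HM s).
case=> M [io [pr D]]; exists M; split.
- exact: dk D.
- move=> s; split; [exact: (dPi D s) | exact: (dsimp D s)].
- exact: dniso D.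
exists io, pr; split.
- exact: dio D.
- exact: dpr D.
- exact: dpi1 D.
- exact: dpi0 D.
- exact: dsum D.
Qed.

Lemma HRd_reindex lambda al (B : rep al) n0 (k0 : 'I_n0 -> nat) (d0 : 'I_n0 -> I -> nat)
  n1 (k1 : 'I_n1 -> nat) (d1 : 'I_n1 -> I -> nat) (sg : 'I_n0 -> 'I_n1) :
  bijective sg -> (forall s, k0 s = k1 (sg s)) -> (forall s i, d0 s i = d1 (sg s) i) ->
  HRd lambda al B n1 k1 d1 -> HRd lambda al B n0 k0 d0.
Proof.
move=> bij Hk Hd.
have ek : k0 = (fun s => k1 (sg s)) by apply: functional_extensionality.
have ed : d0 = (fun s i => d1 (sg s) i).
  by apply: functional_extensionality => s; apply: functional_extensionality.
subst k0 d0; case=> M [io [pr D]].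
have inj : injective sg by apply: bij_inj.
exists (fun s => M (sg s)), (fun s c => io (sg s) c), (fun s c => pr (sg s) c).
constructor.
- by move=> s; exact: (dk D (sg s)).
- by move=> s; exact: (dPi D (sg s)).
- by move=> s; exact: (dsimp D (sg s)).
- move=> s s' ne; apply: (dniso D (sg s) (sg s')); apply: contra ne => /eqP E; apply/eqP; exact: inj.
- by move=> s c; exact: (dio D (sg s) c).
- by move=> s c; exact: (dpr D (sg s) c).
- by move=> s c i; exact: (dpi1 D (sg s) c i).
- move=> s c s' c' i ne; apply: (dpi0 D (sg s) c (sg s') c' i); apply: contra ne.
  by rewrite !xpair_eqE => /andP [/eqP E ->]; rewrite (inj _ _ E) eqxx.
- move=> i; rewrite -(dsum D i) (reindex sg) //; exact: onW_bij.
Qed.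

Lemma hom_inv al (B B' : rep al) (g g' : forall i, 'M[C]_(al i)) :
  (forall i, g' i *m g i = 1%:M) -> (forall i, g i *m g' i = 1%:M) ->
  is_hom B B' g -> is_hom B' B g'.
Proof.
move=> K1 K2 Hg a; have [g1 g2] := Hg a; split.
  by rewrite -[LHS]mulmx1 -(K2 (t a)) !mulmxA -(mulmxA (g' _)) -g1 mulmxA K1 mul1mx.
by rewrite -[LHS]mulmx1 -(K2 (h a)) !mulmxA -(mulmxA (g' _)) -g2 mulmxA K1 mul1mx.
Qed.

Lemma HRd_conj lambda al (B B' : rep al) n k d (g g' : forall i, 'M[C]_(al i)) :
  (forall i, g' i *m g i = 1%:M) -> (forall i, g i *m g' i = 1%:M) ->
  is_hom B B' g -> HRd lambda al B n k d -> HRd lambda al B' n k d.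
Proof.
move=> K1 K2 Hg [M [io [pr D]]].
have Hg' := hom_inv K1 K2 Hg.
exists M, (fun s c i => g i *m io s c i), (fun s c i => pr s c i *m g' i).
constructor.
- exact: dk D.
- exact: dPi D.
- exact: dsimp D.
- exact: dniso D.
- by move=> s c; exact: hom_comp (dio D s c) Hg.
- by move=> s c; exact: hom_comp Hg' (dpr D s c).
- by move=> s c i; rewrite -mulmxA (mulmxA (g' i)) K1 mul1mx (dpi1 D).
- move=> s c s' c' i ne.
  by rewrite -mulmxA (mulmxA (g' i)) K1 mul1mx (dpi0 D).
- move=> i; rewrite -(K2 i) -[in RHS](mulmx1 (g i)) -(dsum D i) sum_conj.
  apply: eq_bigr => s _; rewrite sum_conj; apply: eq_bigr => c _.
  by rewrite !mulmxA.
Qed.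

Lemma stab_hom al (B : rep al) (x : forall i, 'M[C]_(al i)) :
  in_GL x -> (stab B x <-> is_hom B B x).
Proof.
move=> Hx; split.
  case=> _ H a; have [e1 e2] := H a; split.
    by rewrite -[in RHS]e1 mulmxKV.
  by rewrite -[in RHS]e2 mulmxKV.
move=> H; split => // a; have [e1 e2] := H a; split.
  by rewrite e1 mulmxK.
by rewrite e2 mulmxK.
Qed.

Lemma stab_ext al (B : rep al) (x y : forall i, 'M[C]_(al i)) :
  (forall i, x i = y i) -> stab B x -> stab B y.
Proof.
move=> E [Hx H]; split; first by move=> i; rewrite -E.
by move=> a; rewrite -!E.
Qed.

Section Back.
Unset Implicit Arguments.
Variables (lambda : I -> C) (al : I -> nat) (B0 B1 : rep al)
  (n0 : nat) (k0 : 'I_n0 -> nat) (d0 : 'I_n0 -> I -> nat) (M0 : forall s, rep (d0 s))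
  (io0 : forall s (c : 'I_(k0 s)) i, 'M[C]_(al i, d0 s i))
  (pr0 : forall s (c : 'I_(k0 s)) i, 'M[C]_(d0 s i, al i))
  (n1 : nat) (k1 : 'I_n1 -> nat) (d1 : 'I_n1 -> I -> nat) (M1 : forall s, rep (d1 s))
  (io1 : forall s (c : 'I_(k1 s)) i, 'M[C]_(al i, d1 s i))
  (pr1 : forall s (c : 'I_(k1 s)) i, 'M[C]_(d1 s i, al i)).
Hypothesis D0 : decomp lambda al B0 n0 k0 d0 M0 io0 pr0.
Hypothesis D1 : decomp lambda al B1 n1 k1 d1 M1 io1 pr1.
Hypothesis H01 : forall s (c c2 : 'I_(k0 s)), is_hom B1 B1 (fun i => io0 s c i *m pr0 s c2 i).
Hypothesis H10 : forall t (e e2 : 'I_(k1 t)), is_hom B0 B0 (fun i => io1 t e i *m pr1 t e2 i).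
Set Implicit Arguments.

Lemma zz_match s : exists u, forall i, zz io0 pr0 s i = zz io1 pr1 u i.
Proof.
have [a [Ha01 Ha]] := zz_comb D0 D1 H01 H10 s.
have /fin_all_exists [b Hb] : forall u, exists b : 'I_n0 -> C,
    (forall s2, b s2 = 0 \/ b s2 = 1) /\
    forall i, zz io1 pr1 u i = \sum_s2 b s2 *: zz io0 pr0 s2 i.
  by move=> u; exact: (zz_comb D1 D0 H10 H01 u).
have Hc : forall s2, \sum_u a u * b u s2 = (s2 == s)%:R.
  apply: (zz_indep D0) => i; rewrite (Ha i).
  transitivity (\sum_u \sum_s2 (a u * b u s2) *: zz io0 pr0 s2 i).
    by rewrite exchange_big /=; apply: eq_bigr => s2 _; rewrite scaler_suml.
  apply: eq_bigr => u _; rewrite (proj2 (Hb u) i) scaler_sumr.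
  by apply: eq_bigr => s2 _; rewrite scalerA.
have ab01 u s2 : a u * b u s2 = 0 \/ a u * b u s2 = 1.
  by case: (Ha01 u) => ->; [left; rewrite mul0r | rewrite mul1r; exact: (proj1 (Hb u) s2)].
have ab0 u s2 : 0 <= a u * b u s2 by case: (ab01 u s2) => ->; rewrite ?ler01.
case: (boolP [exists u, a u * b u s == 1]) => [/existsP [u /eqP Hu]|/existsPn Hn]; last first.
  have := Hc s; rewrite eqxx big1 => [/eqP|u _]; first by rewrite eq_sym oner_eq0.
  by case: (ab01 u s) => // E; move: (Hn u); rewrite E eqxx.
have Hau : a u = 1.
  by case: (Ha01 u) => // E; move: Hu; rewrite E mul0r => /eqP; rewrite eq_sym oner_eq0.
have Hbu : b u s = 1 by move: Hu; rewrite Hau mul1r.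
exists u => i; rewrite (proj2 (Hb u) i) (bigD1 s) //= Hbu scale1r [X in _ + X]big1 ?addr0 //.
move=> s2 ne; have := Hc s2; rewrite (negbTE ne) => E.
have := @psumr_eq0P _ _ predT (fun u => a u * b u s2) (fun u _ => ab0 u s2) E u isT.
by rewrite Hau mul1r => ->; rewrite scale0r.
Qed.

End Back.

Lemma back_main lambda al (B0 B1 : rep al)
  n0 (k0 : 'I_n0 -> nat) (d0 : 'I_n0 -> I -> nat) (M0 : forall s, rep (d0 s))
  (io0 : forall s (c : 'I_(k0 s)) i, 'M[C]_(al i, d0 s i))
  (pr0 : forall s (c : 'I_(k0 s)) i, 'M[C]_(d0 s i, al i))
  n1 (k1 : 'I_n1 -> nat) (d1 : 'I_n1 -> I -> nat) (M1 : forall s, rep (d1 s))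
  (io1 : forall s (c : 'I_(k1 s)) i, 'M[C]_(al i, d1 s i))
  (pr1 : forall s (c : 'I_(k1 s)) i, 'M[C]_(d1 s i, al i)) :
  decomp lambda al B0 n0 k0 d0 M0 io0 pr0 -> decomp lambda al B1 n1 k1 d1 M1 io1 pr1 ->
  (forall s (c c2 : 'I_(k0 s)), is_hom B1 B1 (fun i => io0 s c i *m pr0 s c2 i)) ->
  (forall u (e e2 : 'I_(k1 u)), is_hom B0 B0 (fun i => io1 u e i *m pr1 u e2 i)) ->
  exists sg : 'I_n0 -> 'I_n1, [/\ bijective sg, forall s, k0 s = k1 (sg s) &
     forall s i, d0 s i = d1 (sg s) i].
Proof.
move=> D0 D1 H01 H10.
have /fin_all_exists [sg Hsg] := zz_match D0 D1 H01 H10.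
have /fin_all_exists [sg' Hsg'] := zz_match D1 D0 H10 H01.
have K1 : cancel sg sg'.
  move=> s; apply: (zz_inj D0) => i; by rewrite -Hsg' -Hsg.
have K2 : cancel sg' sg.
  move=> u; apply: (zz_inj D1) => i; by rewrite -Hsg -Hsg'.
have Hd s i : d0 s i = d1 (sg s) i.
  have [r [r0 Hr]] := dim_div D0 D1 H01 (Hsg s).
  have [r' [r0' Hr']] := dim_div D1 D0 H10 (fun i => esym (Hsg s i)).
  have [j Hj] := dpos D0 s.
  have : (r * r' == 1)%N.
    have := Hr j; rewrite Hr' mulnA => E.
    by rewrite -(eqn_pmul2r Hj) mul1n -E.
  by rewrite muln_eq1 => /andP [/eqP r1 _]; rewrite Hr r1 mul1n.
exists sg; split => //; first by exists sg'.
move=> s; have [j Hj] := dpos D0 s.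
have := tr_zz D0 s j; rewrite (Hsg s j) (tr_zz D1) -Hd => /eqP; rewrite eqr_nat.
by rewrite eqn_pmul2r // => /eqP.
Qed.

Lemma idem_hom al (B : rep al) (U : forall i, 'M[C]_(al i)) :
  is_hom B B (fun i => 1%:M - 2%:R *: U i) -> is_hom B B U.
Proof.
move=> H.
have H2 := hom_comp (hom_sub (hom_scal B 1) H) (hom_scal B (2%:R^-1)).
apply: hom_ext H2 => i.
rewrite opprB addrC subrK mul_scalar_mx scalerA mulVf ?scale1r //.
by rewrite pnatr_eq0.
Qed.

Lemma idem_unit m (U : 'M[C]_m) : U *m U = U ->
  (1%:M - 2%:R *: U) *m (1%:M - 2%:R *: U) = 1%:M.
Proof.
move=> HU; set V := 2%:R *: U.
have VV : V *m V = V + V.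
  by rewrite /V -scalemxAl -scalemxAr HU scaler_nat mulr2n.
by rewrite mulmxBl !mulmxBr !mul1mx mulmx1 VV opprB addrK subrK.
Qed.

Lemma conj_fwd lambda al (B B0 : rep al) n k d (M M0 : forall s, rep (d s))
  (io io0 : forall s (c : 'I_(k s)) i, 'M[C]_(al i, d s i))
  (pr pr0 : forall s (c : 'I_(k s)) i, 'M[C]_(d s i, al i)) :
  decomp lambda al B n k d M io pr -> decomp lambda al B0 n k d M0 io0 pr0 ->
  conj_subsets (stab B) (stab B0).
Proof.
move=> D D0.
pose T i := TT io0 pr i; pose T' i := TT' io pr0 i.
have K i : T i *m T' i = 1%:M := TTK D D0 i.
have K' i : T' i *m T i = 1%:M := mulmx1C (K i).
have U i : T i \in unitmx := (mulmx1_unit (K i)).1.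
have Inv i : invmx (T i) = T' i.
  by rewrite -[LHS]mulmx1 -(K i) mulmxA (mulVmx (U i)) mul1mx.
exists T; split => // x; split.
  move=> Sx; have [Ux _] := Sx; have Hx := (stab_hom B Ux).1 Sx.
  have Uy : in_GL (fun i => T i *m x i *m invmx (T i)).
    by move=> i; rewrite !unitmx_mul U Ux unitmx_inv U.
  apply/(stab_hom B0 Uy); apply: hom_ext (transfer D D0 Hx) => i.
  by rewrite Inv.
move=> Sy; have [Uy _] := Sy.
have Ex i : T' i *m (T i *m x i *m invmx (T i)) *m T i = x i.
  by rewrite Inv !mulmxA K' mul1mx -mulmxA K' mulmx1.
have Ux : in_GL x.
  move=> i; rewrite -Ex unitmx_mul (U i) andbT unitmx_mul (mulmx1_unit (K' i)).1 /=.
  exact: Uy i.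
have Hy := (stab_hom B0 Uy).1 Sy.
apply/(stab_hom B Ux); apply: hom_ext (transfer D0 D Hy) => i.
exact: Ex.
Qed.

Lemma conj_bwd lambda al (B B0 : rep al)
  n0 (k0 : 'I_n0 -> nat) (d0 : 'I_n0 -> I -> nat) n1 (k1 : 'I_n1 -> nat) (d1 : 'I_n1 -> I -> nat) :
  HRd lambda al B0 n0 k0 d0 -> HRd lambda al B n1 k1 d1 ->
  conj_subsets (stab B) (stab B0) -> HRd lambda al B n0 k0 d0.
Proof.
move=> [M0 [io0 [pr0 D0]]] HB [g [Hg Hiff]].
pose B1 : rep al := Rep (fun a => g (h a) *m arr B a *m invmx (g (t a)))
                        (fun a => g (t a) *m arrs B a *m invmx (g (h a))).
pose g' i := invmx (g i).
have K1 i : g' i *m g i = 1%:M by rewrite /g' mulVmx.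
have K2 i : g i *m g' i = 1%:M by rewrite /g' mulmxV.
have Hgh : is_hom B B1 g.
  by move=> a; split; rewrite /= mulmxKV.
have Hg' := hom_inv K1 K2 Hgh.
have [M1 [io1 [pr1 D1]]] := HRd_conj K1 K2 Hgh HB.
have T01 (x : forall i, 'M[C]_(al i)) : in_GL x -> is_hom B0 B0 x -> is_hom B1 B1 x.
  move=> Ux Hx.
  pose z i := g' i *m x i *m g i.
  have Uz : in_GL z by move=> i; rewrite !unitmx_mul unitmx_inv Hg Ux.
  have Sz : stab B z.
    apply/Hiff; apply: stab_ext ((stab_hom B0 Ux).2 Hx) => i.
    by rewrite /z !mulmxA K2 mul1mx -mulmxA K2 mulmx1.
  have Hz := (stab_hom B Uz).1 Sz.
  apply: hom_ext (hom_comp (hom_comp Hg' Hz) Hgh) => i.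
  by rewrite /z !mulmxA K2 mul1mx -mulmxA K2 mulmx1.
have T10 (x : forall i, 'M[C]_(al i)) : in_GL x -> is_hom B1 B1 x -> is_hom B0 B0 x.
  move=> Ux Hx.
  pose z i := g' i *m x i *m g i.
  have Uz : in_GL z by move=> i; rewrite !unitmx_mul unitmx_inv Hg Ux.
  have Hz : is_hom B B z.
    by apply: hom_ext (hom_comp (hom_comp Hgh Hx) Hg') => i; rewrite /z mulmxA.
  have := (Hiff z).1 ((stab_hom B Uz).2 Hz).
  move=> Sy; have [Uy _] := Sy; have := (stab_hom B0 Uy).1 Sy.
  apply: hom_ext => i.
  by rewrite /z !mulmxA K2 mul1mx -mulmxA K2 mulmx1.
have GLx (U : forall i, 'M[C]_(al i)) : (forall i, U i *m U i = U i) ->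
    in_GL (fun i => 1%:M - 2%:R *: U i).
  by move=> HU i; have := (mulmx1_unit (idem_unit (HU i))).1.
have hx (B' : rep al) (U : forall i, 'M[C]_(al i)) : is_hom B' B' U ->
    is_hom B' B' (fun i => 1%:M - 2%:R *: U i).
  move=> HU; apply: hom_ext (hom_sub (hom_scal B' 1) (hom_comp HU (hom_scal B' 2%:R))) => i.
  by rewrite mul_scalar_mx.
have GLn (U : forall i, 'M[C]_(al i)) : (forall i, U i *m U i = 0) ->
    in_GL (fun i => 1%:M + U i).
  move=> HU i; have E : (1%:M + U i) *m (1%:M - U i) = 1%:M.
    by rewrite mulmxDl !mulmxBr !mul1mx mulmx1 HU subr0 subrK.
  exact: (mulmx1_unit E).1.
have hn (B' : rep al) (U : forall i, 'M[C]_(al i)) : is_hom B' B' U ->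
    is_hom B' B' (fun i => 1%:M + U i).
  by move=> HU; exact: hom_add (hom_scal B' 1) HU.
have nh (B' : rep al) (U : forall i, 'M[C]_(al i)) :
    is_hom B' B' (fun i => 1%:M + U i) -> is_hom B' B' U.
  by move=> HU; apply: hom_ext (hom_sub HU (hom_scal B' 1)) => i; rewrite addrAC subrr add0r.
have H01 s (c c2 : 'I_(k0 s)) : is_hom B1 B1 (fun i => io0 s c i *m pr0 s c2 i).
  have HU : forall i, (io0 s c i *m pr0 s c2 i) *m (io0 s c i *m pr0 s c2 i) =
      if c == c2 then io0 s c i *m pr0 s c2 i else 0.
    by move=> i; rewrite mulmxA (unit_io D0); case: eqP => // _; rewrite mul0mx.
  case: (eqVneq c c2) => [E|ne].
    apply: idem_hom; apply: T01 (GLx _ _) _; first by move=> i; rewrite HU E eqxx.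
    apply: hx; exact: hom_unit D0 s c c2.
  apply: nh; apply: T01 (GLn _ _) _; first by move=> i; rewrite HU (negbTE ne).
  apply: hn; exact: hom_unit D0 s c c2.
have H10 u (e e2 : 'I_(k1 u)) : is_hom B0 B0 (fun i => io1 u e i *m pr1 u e2 i).
  have HU : forall i, (io1 u e i *m pr1 u e2 i) *m (io1 u e i *m pr1 u e2 i) =
      if e == e2 then io1 u e i *m pr1 u e2 i else 0.
    by move=> i; rewrite mulmxA (unit_io D1); case: eqP => // _; rewrite mul0mx.
  case: (eqVneq e e2) => [E|ne].
    apply: idem_hom; apply: T10 (GLx _ _) _; first by move=> i; rewrite HU E eqxx.
    apply: hx; exact: hom_unit D1 u e e2.
  apply: nh; apply: T10 (GLn _ _) _; first by move=> i; rewrite HU (negbTE ne).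
  apply: hn; exact: hom_unit D1 u e e2.
have [sg [bij Hk Hd]] := back_main D0 D1 H01 H10.
have HB1 : HRd lambda al B1 n0 k0 d0.
  by apply: (HRd_reindex bij Hk Hd); exists M1, io1, pr1.
exact: HRd_conj K2 K1 Hg' HB1.
Qed.

End Gen.

Unset Implicit Arguments.
Theorem theorem5p4 (R : realType) (I A : finType) (h t : A -> I)
    (alpha : I -> nat) (lambda : I -> R[i])
    (hla : \sum_(i : I) lambda i * (alpha i)%:R = 0)
    (tau : reptype I)
    (hne : exists B : rep (R[i]) h t alpha,
             is_Pi_mod lambda B /\ has_reptype lambda B tau) :
  exists nu : GLfam (R[i]) alpha -> Prop,
    forall B : rep (R[i]) h t alpha,
      is_Pi_mod lambda B -> semisimple lambda B ->
      (has_reptype lambda B tau <-> conj_subsets (stab B) nu).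
Proof.
case: hne => B0 [_ Hr0]; exists (stab B0) => B _ [tau' Hr']; split.
  move/has_reptypeE => [M [io [pr D]]].
  move/has_reptypeE: Hr0 => [M0 [io0 [pr0 D0]]].
  exact: conj_fwd D D0.
move=> Hc; apply/has_reptypeE.
exact: conj_bwd (proj1 (has_reptypeE _ _ _) Hr0) (proj1 (has_reptypeE _ _ _) Hr') Hc.
Qed.
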